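(* Let $0<\alpha<1$ and $1\le i\le k\le 6$, and let $w^{(k,i)}_{n,j}$, $\omega^{(k,i)}_m$ be the weights defined in the context. Let $u_0,\dots,u_{k-1}\in\mathbb{C}$ be arbitrary (bounded) starting values and define the power series $$g^{(k,i)}(\xi)=\sum_{n=0}^{\infty}g^{(k,i)}_n\xi^n,\qquad g^{(k,i)}_n=-\sum_{j=0}^{k-1}u_{j}\big(w_{n+k,j}^{(k,i)}+\omega_{n+k-j}^{(k,i)}\big).$$ Then $g^{(k,i)}_n\to 0$ as $n\to\infty$.
   Context: Uniform grid $t_n=n\Delta t$, $\Delta t>0$, $I_j=[t_{j-1},t_j]$. For a function $u$ and integers $m\ge1$, $j$, $q$, let $p^{m}_{j,q}$ be the polynomial of degree at most $m$ interpolating $u$ at $t_{j+q-m-1},\dots,t_{j+q-1}$. For $1\le i\le k\le 6$ and $n\ge k$, let $P^{k}_{i,n}$ be the continuous piecewise polynomial on $[0,t_n]$ equal on $I_j$ to $p^{k-1}_{j,k-j}$ for $1\le j\le k-i$, to $p^{k}_{j,i}$ for $k-i+1\le j\le n-i+1$, and to $p^{k}_{j,n+1-j}$ for $n-i+2\le j\le n$, and set $D^{\alpha}_{k,i}u_n=\frac{1}{\Gamma(1-\alpha)}\int_0^{t_n}(t_n-\xi)^{-\alpha}(P^{k}_{i,n})'(\xi)\,\mathrm{d}\xi$. This is a linear combination of $u_0=u(t_0),\dots,u_n=u(t_n)$; for $k\le j\le n$ the coefficient of $u_j$ in $(\Delta t)^{\alpha}D^{\alpha}_{k,i}u_n$ depends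 only on $n-j$ (not on $n$ or $\Delta t$ separately) and is denoted $\omega^{(k,i)}_{n-j}$; this defines $\omega^{(k,i)}_m$ for all $m\ge 0$. The weights $w^{(k,i)}_{n,j}$ ($0\le j\le k-1$, $n\ge k$) are then defined by $(\Delta t)^{\alpha}D^{\alpha}_{k,i}u_n=\sum_{j=0}^{k-1}w^{(k,i)}_{n,j}u_j+\sum_{j=0}^{n}\omega^{(k,i)}_{n-j}u_j$ (for arbitrary values $u_j$). *)

(* Defs.v *)
From HB Require Import structures.
From mathcomp Require Import all_boot all_order all_algebra.
From mathcomp Require Import all_classical all_reals all_analysis.
From mathcomp Require Import complex.
Set Implicit Arguments. Unset Strict Implicit. Unset Printing Implicit Defensive.
Import Order.TTheory GRing.Theory Num.Theory.
Import numFieldNormedType.Exports.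
Local Open Scope classical_set_scope.
Local Open Scope ring_scope.

Section Weights.
Variable R : realType.

Definition Gamma (s : R) : R :=
  Rintegral (@lebesgue_measure R) `]0%R, +oo[
    (fun x => x `^ (s - 1) * expR (- x)).

Definition tpt (dt : R) (a : nat) : R := a%:R * dt.

Definition lagrange (dt : R) (u : nat -> R) (m s0 : nat) : {poly R} :=
  \sum_(a < m.+1) u (s0 + a)%N *:
     \prod_(b < m.+1 | b != a)
        (('X - (tpt dt (s0 + b)%N)%:P) *
         ((tpt dt (s0 + a)%N - tpt dt (s0 + b)%N)^-1)%:P).

(* p^m_{j,q}: interpolates u at t_{j+q-m-1}, ..., t_{j+q-1}
   (in every use below j + q >= m + 1, so the nat subtraction is exact). *)
Definition pint (dt : R) (u : nat -> R) (m j q : nat) : {poly R} :=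
  lagrange dt u m (j + q - m - 1)%N.

(* The polynomial piece of P^k_{i,n} on I_j = [t_{j-1}, t_j], 1 <= j <= n. *)
Definition Ppiece (dt : R) (u : nat -> R) (k i n j : nat) : {poly R} :=
  if (j <= k - i)%N then pint dt u k.-1 j (k - j)
  else if (j <= n - i + 1)%N then pint dt u k j i
  else pint dt u k j (n + 1 - j).

Definition Dfrac (dt alpha : R) (k i : nat) (u : nat -> R) (n : nat) : R :=
  (Gamma (1 - alpha))^-1 *
  \sum_(1 <= j < n.+1)
     Rintegral (@lebesgue_measure R) `[tpt dt j.-1, tpt dt j]
       (fun x => (tpt dt n - x) `^ (- alpha) * ((Ppiece dt u k i n j)^`()).[x]).

(* Coefficient of u_l in (dt)^alpha D^alpha_{k,i} u_n (the operator is linear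
   in u, so this is its value on the l-th unit sequence). *)
Definition coef (dt alpha : R) (k i n l : nat) : R :=
  dt `^ alpha * Dfrac dt alpha k i (fun m => (m == l)%:R) n.

(* omega^{(k,i)}_m : the coefficient of u_j (k <= j <= n) in
   (dt)^alpha D^alpha_{k,i} u_n, which depends only on m = n - j;
   we take dt = 1, n = m + k, j = k. *)
Definition omega (alpha : R) (k i m : nat) : R := coef 1 alpha k i (m + k) k.

(* w^{(k,i)}_{n,j}, 0 <= j <= k-1, n >= k: the coefficient of u_j is
   w_{n,j} + omega_{n-j}. *)
Definition wstart (alpha : R) (k i n j : nat) : R :=
  coef 1 alpha k i n j - omega alpha k i (n - j).

Definition gcoef (alpha : R) (k i : nat) (u : nat -> R[i]) (n : nat) : R[i] :=
  - \sum_(j < k) u j * (wstart alpha k i (n + k) j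
                         + omega alpha k i (n + k - j))%:C%C.

End Weights.

(* Main.v *)
Require Import Defs.
From HB Require Import structures.
From mathcomp Require Import all_boot all_order all_algebra.
From mathcomp Require Import all_classical all_reals all_analysis.
From mathcomp Require Import complex.
From mathcomp Require Import zify ring lra.
From mathcomp Require Import measurable_realfun.
Import Order.TTheory GRing.Theory Num.Theory.
Import numFieldNormedType.Exports.
Local Open Scope classical_set_scope.
Local Open Scope ring_scope.
Import Defs.

Lemma poly_bound (R : realType) (p : {poly R}) (C : R) :
  exists M, forall x, `|x| <= C -> `|p.[x]| <= M.
Proof.
exists (\sum_(i < size p) `|p`_i| * `|C| ^+ i) => x hx.
rewrite horner_coef; apply: (le_trans (ler_norm_sum _ _ _)).
apply: ler_sum => j _; rewrite normrM normrX.
apply: ler_wpM2l => //; apply: lerXn2r; rewrite ?nnegrE //.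
exact: (le_trans hx (ler_norm _)).
Qed.
Lemma powN_cvg0 (R : realType) (alpha : R) : 0 < alpha ->
  (fun n : nat => (n.+1)%:R `^ (- alpha)) @ \oo --> (0:R).
Proof.
move=> a0; apply/cvgrPdist_le => e e0.
near=> n.
rewrite sub0r normrN ger0_norm ?powR_ge0 // powRN.
have h : (e^-1) `^ (alpha^-1) <= (n.+1)%:R.
  apply: (@le_trans _ _ (n%:R)); last by rewrite ler_nat.
  near: n; exact: nbhs_infty_ger.
have H : e^-1 <= n.+1%:R `^ alpha.
  have := ge0_ler_powR (ltW a0) _ _ h.
  rewrite -powRrM mulVf ?gt_eqF // powRr1; last by rewrite invr_ge0 ltW.
  apply; rewrite nnegrE ?powR_ge0 //.
rewrite -[e]invrK lef_pV2 ?posrE ?powR_gt0 ?invr_gt0 //.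
Unshelve. all: by end_near. Qed.
Lemma Rint_bound (R : realType) (a b M : R) (f : R -> R) : a <= b ->
  measurable_fun setT f -> (forall x, a <= x <= b -> `|f x| <= M) ->
  `|Rintegral (@lebesgue_measure R) `[a, b] f| <= M * (b - a).
Proof.
move=> ab mf hf.
have muD : lebesgue_measure (`[a, b] : set R) = (b - a)%:E.
  by rewrite lebesgue_measure_itv /= lte_fin; case: ltgtP ab => //= -> _; rewrite subrr.
have muDfin : (lebesgue_measure (`[a, b] : set R) < +oo)%E by rewrite muD ltry.
have mfD : measurable_fun `[a, b] f by apply: measurable_funTS.
have intf : (@lebesgue_measure R).-integrable `[a, b] (EFin \o f).
  apply: measurable_bounded_integrable => //.
  rewrite /bounded_near; near=> M' => x /=; rewrite in_itv /= => /hf h.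
  apply: (le_trans h); near: M'; apply: nbhs_pinfty_ge; exact: num_real.
apply: (le_trans (le_normr_Rintegral _ intf)) => //.
have -> : M * (b - a) = Rintegral (@lebesgue_measure R) `[a, b] (fun=> M).
  rewrite Rintegral_cst //; exact: (congr1 (fun z => M * fine z) (esym muD)).
apply: le_Rintegral => //.
- exact: integrable_norm.
- apply: measurable_bounded_integrable => //.
  by exists `|M|; split => [|y hy z _ /=]; [exact: num_real | exact: ltW].
Unshelve. all: by end_near. Qed.

Lemma piece_cvg0 (R : realType) (alpha : R) (l : nat) (q : {poly R}) :
  0 < alpha ->
  (fun n : nat => Rintegral (@lebesgue_measure R) `[tpt 1 l.-1, tpt 1 l]
     (fun x => (tpt 1 n - x) `^ (- alpha) * q.[x])) @ \oo --> (0:R).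
Proof.
move=> a0.
rewrite -(cvg_shiftn l.+1) /=.
have [Mq hMq] := @poly_bound _ q (l%:R).
set a := tpt 1 l.-1; set b := tpt 1 l.
have ab : a <= b by rewrite /a /b /tpt !mulr1 ler_nat leq_pred.
set g := fun n : nat => (Mq * (b - a)) * n.+1%:R `^ (- alpha).
have g0 : g @ \oo --> (0:R).
  rewrite -(mulr0 (Mq * (b - a))); apply: cvgMl_tmp; exact: powN_cvg0.
apply: (@squeeze_cvgr _ _ _ _ (fun n => - g n) g).
- near=> n; rewrite -ler_norml /g mulrAC.
  apply: Rint_bound => //.
  + apply: measurable_funM; last exact: measurable_poly.
    apply: (@measurableT_comp _ _ _ _ _ _ (@powR R ^~ (- alpha))) => //.
    exact: (@measurable_funB _ _ _ _ (cst _) id).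
  + move=> x /andP [ax xb].
    have x0 : 0 <= x by apply: le_trans ax; rewrite /a /tpt mulr1.
    have xl : x <= l%:R by move: xb; rewrite /b /tpt mulr1.
    have hN : n.+1%:R <= tpt 1 (n + l.+1) - x.
      rewrite /tpt mulr1 lerBrDr; apply: le_trans (lerD (lexx _) xl) _.
      by rewrite -natrD ler_nat; lia.
    rewrite normrM mulrC; apply: ler_pM => //.
    * apply: hMq; rewrite ger0_norm //.
    * rewrite ger0_norm ?powR_ge0 // !powRN lef_pV2 ?posrE ?powR_gt0 //.
        apply: ge0_ler_powR => //; [exact: ltW | rewrite nnegrE //|].
        by rewrite nnegrE; apply: le_trans hN.
      by apply: lt_le_trans hN.
- rewrite -oppr0; exact: cvgN.
- exact: g0.
Unshelve. all: by end_near. Qed.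

Lemma lagrange_zero (R : realType) (dt : R) (j m s0 : nat) :
  (j < s0)%N -> lagrange dt (fun t => (t == j)%:R) m s0 = 0.
Proof.
move=> js; rewrite /lagrange big1 // => a _.
have -> : (s0 + a == j) = false by apply/negbTE/eqP; lia.
by rewrite scale0r.
Qed.

Lemma coef_cvg0 (R : realType) (alpha : R) (k i j : nat) :
  0 < alpha -> (1 <= i <= k)%N -> (j < k)%N ->
  (fun n : nat => coef 1 alpha k i (n + k) j) @ \oo --> (0:R).
Proof.
move=> a0 /andP [i1 ik] jk.
set e := fun t : nat => (t == j)%:R : R.
set Q := fun l : nat => if (l <= k - i)%N then pint 1 e k.-1 l (k - l)
                         else pint 1 e k l i.
set G := fun (l n : nat) => Rintegral (@lebesgue_measure R)
   `[tpt 1 l.-1, tpt 1 l]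
   (fun x => (tpt 1 (n + k) - x) `^ (- alpha) * ((Q l)^`()).[x]).
have HG : (fun n => \sum_(l <- index_iota 1 (2 * k).+1) G l n) @ \oo --> (0:R).
  have HC : continuous (fun x : R * R => x.1 + x.2).
    by move=> z; apply: add_continuous.
  have := @cvg_big R nat +%R 0 xpredT HC nat \oo
    (index_iota 1 (2 * k).+1) G (fun=> 0) _.
  rewrite big1 //; apply => // l _.
  have := @piece_cvg0 R alpha l ((Q l)^`()) a0.
  by rewrite -(cvg_shiftn k).
rewrite /coef powR1 /=.
under eq_fun do rewrite mul1r.
rewrite -(mulr0 (Gamma (1 - alpha))^-1); apply: cvgMl_tmp.
apply: cvg_trans HG; apply: near_eq_cvg; near=> n.
have n2k : (2 * k <= n)%N by near: n; apply: nbhs_infty_ge.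
apply/esym; rewrite (big_cat_nat _ (n := (2 * k).+1)) //=; last by lia.
rewrite [X in _ + X]big1_seq ?addr0; last first.
  move=> l; rewrite mem_index_iota => /andP [l1 l2].
  have Pz : Ppiece 1 e k i (n + k) l = 0.
    rewrite /Ppiece /pint; case: ifP => h1; first by lia.
    by case: ifP => h2; apply: lagrange_zero; lia.
  rewrite (_ : (fun x => _) = fun=> 0); last first.
    by apply: funext => x; rewrite Pz deriv0 horner0 mulr0.
  by rewrite Rintegral_cst // mul0r.
apply: eq_big_seq => l; rewrite mem_index_iota => /andP [l1 l2].
rewrite /G /Q /Ppiece; case: ifP => // h1.
by have -> : (l <= n + k - i + 1)%N by lia.
Unshelve. all: by end_near. Qed.

Lemma gcoef_eq (R : realType) (alpha : R) (k i : nat) (u : nat -> R[i]) n :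
  gcoef alpha k i u n =
  - \sum_(j < k) u j * (coef 1 alpha k i (n + k) j)%:C%C.
Proof. by congr (- _); apply: eq_bigr => j _; rewrite /wstart subrK. Qed.

Lemma Re_sum (R : realType) k (F : 'I_k -> R[i]) :
  complex.Re (\sum_(j < k) F j) = \sum_(j < k) complex.Re (F j).
Proof.
apply: (big_morph (@complex.Re R)) => //.
by move=> [a b] [c d].
Qed.

Lemma Im_sum (R : realType) k (F : 'I_k -> R[i]) :
  complex.Im (\sum_(j < k) F j) = \sum_(j < k) complex.Im (F j).
Proof.
apply: (big_morph (@complex.Im R)) => //.
by move=> [a b] [c d].
Qed.

Lemma sum_cvg0 (R : realType) k (c : nat -> R) (f : nat -> nat -> R) :
  (forall j, (j < k)%N -> f j @ \oo --> (0:R)) ->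
  (fun n => - \sum_(j < k) c j * f j n) @ \oo --> (0:R).
Proof.
move=> hf.
have HC : continuous (fun x : R * R => x.1 + x.2).
  by move=> z; apply: add_continuous.
have H : (fun n => \sum_(j < k) c j * f j n) @ \oo --> (0:R).
  have := @cvg_big R 'I_k +%R 0 xpredT HC nat \oo (index_enum 'I_k)
    (fun j n => c j * f j n) (fun=> 0) _.
  rewrite big1 //; apply => // j _.
  rewrite -(mulr0 (c j)); apply: cvgMl_tmp; exact: hf.
have := cvgN H; rewrite oppr0; exact.
Qed.

Theorem lemma3p4 (R : realType) (alpha : R) (k i : nat) (u : nat -> R[i]) :
  0 < alpha < 1 -> (1 <= i <= k)%N -> (k <= 6)%N ->
  (fun n => complex.Re (gcoef alpha k i u n)) @ \oo --> (0 : R) /\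
  (fun n => complex.Im (gcoef alpha k i u n)) @ \oo --> (0 : R).
Proof.
move=> /andP [a0 _] hik _.
have hc j : (j < k)%N -> (fun n => coef 1 alpha k i (n + k) j) @ \oo --> (0:R).
  by move=> jk; apply: coef_cvg0.
split.
- have := @sum_cvg0 R k (fun j => complex.Re (u j))
           (fun j n => coef 1 alpha k i (n + k) j) hc.
  apply: cvg_trans; apply: near_eq_cvg; near=> n.
  rewrite gcoef_eq.
  have -> : forall z : R[i], complex.Re (- z) = - complex.Re z by case.
  rewrite Re_sum; congr (- _); apply: eq_bigr => j _.
  by case: (u j) => a b /=; rewrite mulr0 subr0.
- have := @sum_cvg0 R k (fun j => complex.Im (u j))
           (fun j n => coef 1 alpha k i (n + k) j) hc.
  apply: cvg_trans; apply: near_eq_cvg; near=> n.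
  rewrite gcoef_eq.
  have -> : forall z : R[i], complex.Im (- z) = - complex.Im z by case.
  rewrite Im_sum; congr (- _); apply: eq_bigr => j _.
  by case: (u j) => a b /=; rewrite mulr0 add0r.
Unshelve. all: by end_near. Qed.
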